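(* Let $i>1$, $1\le k\le5$ and $1\le j\le6$. Then there exist $1\le k'\le5$ and $1\le j'\le6$ such that $$\Sigma_i\big(I_k^{(i+2)}C_j(i)\big)=I_{k'}^{(i)}C_{j'}(i+1).$$
   Context: Words are finite sequences of integers; for a word $w$, $\mathrm{ev}_a$ is the number of occurrences of $a$. For $b=a+1$ and a word with $(\mathrm{ev}_a,\mathrm{ev}_b)\in\{(1,2),(2,1)\}$: $\sigma_a$ replaces the subword of letters in $\{a,b\}$, keeping positions, via $aab\leftrightarrow abb$, $aba\leftrightarrow bba$, $baa\leftrightarrow bab$; $\bar\sigma_a$ replaces it via $aab\leftrightarrow bab$, $aba\leftrightarrow abb$, $baa\leftrightarrow bba$. Compositions act right to left. On pairs of words, $\Sigma_i(w_1,w_2)=(\bar\sigma_i\sigma_{i+1}w_1,\ \sigma_i\bar\sigma_{i+1}w_2)$. For $b=a+1$: $C_1(a)=(aabb,baab)$, $C_2(a)=(abab,abab)$, $C_3(a)=(abba,aabb)$, $C_4(a)=(baab,bbaa)$, $C_5(a)=(baba,baba)$, $C_6(a)=(bbaa,abba)$. Insertion: $I_k^{(a)}(w_1\cdots w_n)=w_1\cdots w_{k-1}\,a\,w_k\cdots w_n$ ($1\le k\le n+1$; $I_1^{(a)}w=aw$, $I_{n+1}^{(a)}w=wa$), acting on pairs componentwise. *)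

(* Defs.v *)
From mathcomp Require Import all_boot all_algebra.
Set Implicit Arguments. Unset Strict Implicit. Unset Printing Implicit Defensive.
Import GRing.Theory Num.Theory.
Local Open Scope ring_scope.

Definition ev (a : int) (w : seq int) : nat := count_mem a w.

Fixpoint replace_sub (P : pred int) (q w : seq int) : seq int :=
  match w with
  | [::] => [::]
  | x :: w' =>
      if P x then
        match q with
        | y :: q' => y :: replace_sub P q' w'
        | [::] => x :: replace_sub P q w'
        end
      else x :: replace_sub P q w'
  end.

Fixpoint partner (s : seq int) (tbl : seq (seq int * seq int)) : option (seq int) :=
  match tbl with
  | [::] => None
  | (u, v) :: tbl' =>
      if s == u then Some v else if s == v then Some u else partner s tbl'
  end.

Definition sigma_tbl (a b : int) : seq (seq int * seq int) :=
  [:: ([:: a; a; b], [:: a; b; b]); ([:: a; b; a], [:: b; b; a]);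
      ([:: b; a; a], [:: b; a; b])].

Definition sigmabar_tbl (a b : int) : seq (seq int * seq int) :=
  [:: ([:: a; a; b], [:: b; a; b]); ([:: a; b; a], [:: a; b; b]);
      ([:: b; a; a], [:: b; b; a])].

Definition sigma_gen (tbl : int -> int -> seq (seq int * seq int))
    (a : int) (w : seq int) : option (seq int) :=
  let b := a + 1 in
  let P := fun x : int => (x == a) || (x == b) in
  if ((ev a w, ev b w) == (1%N, 2%N)) || ((ev a w, ev b w) == (2%N, 1%N)) then
    match partner (filter P w) (tbl a b) with
    | Some q => Some (replace_sub P q w)
    | None => None
    end
  else None.

Definition sigma (a : int) (w : seq int) := sigma_gen sigma_tbl a w.
Definition sigmabar (a : int) (w : seq int) := sigma_gen sigmabar_tbl a w.

Definition Sigma (i : int) (p : seq int * seq int) : option (seq int * seq int) :=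
  match obind (sigmabar i) (sigma (i + 1) p.1),
        obind (sigma i) (sigmabar (i + 1) p.2) with
  | Some u, Some v => Some (u, v)
  | _, _ => None
  end.

Definition C (j : nat) (a : int) : seq int * seq int :=
  let b := a + 1 in
  match j with
  | 1 => ([:: a; a; b; b], [:: b; a; a; b])
  | 2 => ([:: a; b; a; b], [:: a; b; a; b])
  | 3 => ([:: a; b; b; a], [:: a; a; b; b])
  | 4 => ([:: b; a; a; b], [:: b; b; a; a])
  | 5 => ([:: b; a; b; a], [:: b; a; b; a])
  | 6 => ([:: b; b; a; a], [:: a; b; b; a])
  | _ => ([::], [::])
  end%N.

(* I_k^{(a)} w = w_1 ... w_{k-1} a w_k ... w_n  (1 <= k <= n+1) *)
Definition ins (k : nat) (a : int) (w : seq int) : seq int :=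
  take k.-1 w ++ a :: drop k.-1 w.

Definition ins_pair (k : nat) (a : int) (p : seq int * seq int) :=
  (ins k a p.1, ins k a p.2).

(* Main.v *)
Require Import Defs.
From mathcomp Require Import all_boot all_algebra.
Local Open Scope ring_scope.
Import GRing.Theory.

Definition mapP (f : int -> int) (p : seq int * seq int) := (map f p.1, map f p.2).
Definition mapT (f : int -> int) (t : seq (seq int * seq int)) := map (mapP f) t.

Section Shift.
Variable c : int.
Let f := fun x : int => c + x.
Lemma f_inj : injective f. Proof. by move=> x y; rewrite /f => /addrI. Qed.

Lemma partner_map s tbl : partner (map f s) (mapT f tbl) = omap (map f) (partner s tbl).
Proof.
elim: tbl => [|[u v] t IH] //=.
rewrite !(inj_eq (inj_map f_inj)).
by case: (s == u) => //; case: (s == v).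
Qed.

Lemma replace_map (P P' : pred int) q w : (forall x, P' (f x) = P x) ->
  replace_sub P' (map f q) (map f w) = map f (replace_sub P q w).
Proof.
move=> HP; elim: w q => [|x w IH] q //=.
rewrite HP; case: (P x); last by rewrite IH.
by case: q => [|y q] /=; rewrite ?IH // -(IH [::]).
Qed.

Lemma ev_map a w : ev (f a) (map f w) = ev a w.
Proof. by rewrite /ev count_map; apply: eq_count => x /=; rewrite (inj_eq f_inj). Qed.

Lemma sigma_gen_map tbl a w :
  tbl (f a) (f a + 1) = mapT f (tbl a (a + 1)) ->
  sigma_gen tbl (f a) (map f w) = omap (map f) (sigma_gen tbl a w).
Proof.
move=> Ht; rewrite /sigma_gen.
have E1 : f a + 1 = f (a + 1) by rewrite /f addrA.
rewrite E1 !ev_map.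
case: ifP => // _.
have HP : forall x, ((f x == f a) || (f x == f (a + 1))) = ((x == a) || (x == a + 1)).
  by move=> x; rewrite !(inj_eq f_inj).
rewrite filter_map (eq_filter HP) -E1 Ht partner_map.
case: partner => //= q.
rewrite E1 (replace_map _ _ q w HP). done.
Qed.

Lemma sigma_map a w : sigma (f a) (map f w) = omap (map f) (sigma a w).
Proof.
apply: sigma_gen_map.
by rewrite /sigma_tbl /mapT /mapP /= /f addrA.
Qed.

Lemma sigmabar_map a w : sigmabar (f a) (map f w) = omap (map f) (sigmabar a w).
Proof.
apply: sigma_gen_map.
by rewrite /sigmabar_tbl /mapT /mapP /= /f addrA.
Qed.

Lemma Sigma_map p : Sigma (f 0) (mapP f p) = omap (mapP f) (Sigma 0 p).
Proof.
rewrite /Sigma /mapP /=.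
have E1 : f 0 + 1 = f 1 by rewrite /f addr0.
rewrite E1 add0r sigma_map sigmabar_map.
case: (sigma 1 p.1) => [u|] /=; last first.
  by case: (sigmabar 1 p.2) => [v|] //=; rewrite sigma_map; case: sigma.
rewrite sigmabar_map.
case: (sigmabar 1 p.2) => [v|] /=; rewrite ?sigma_map.
  by case: (sigmabar 0 u) => //= u'; case: (sigma 0 v).
by case: (sigmabar 0 u).
Qed.

Lemma ins_map k a w : ins k (f a) (map f w) = map f (ins k a w).
Proof. by rewrite /ins map_cat /= map_take map_drop. Qed.

End Shift.

Lemma ins_map' c k a w : ins k (c + a) (map (fun x => c + x) w) = map (fun x => c + x) (ins k a w).
Proof. exact: ins_map. Qed.
Lemma Sigma_map' c p : Sigma (c + 0) (mapP (fun x => c + x) p) = omap (mapP (fun x => c + x)) (Sigma 0 p).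
Proof. exact: Sigma_map. Qed.

Lemma base k j : (1 <= k <= 5)%N -> (1 <= j <= 6)%N ->
  has (fun kj : nat * nat => Sigma 0 (ins_pair k 2 (C j 0)) == Some (ins_pair kj.1 0 (C kj.2 1)))
    [seq (x, y) | x <- iota 1 5, y <- iota 1 6].
Proof.
move=> hk hj.
have A : all (fun k => all (fun j => has (fun kj : nat * nat => Sigma 0 (ins_pair k 2 (C j 0)) == Some (ins_pair kj.1 0 (C kj.2 1)))
    [seq (x, y) | x <- iota 1 5, y <- iota 1 6]) (iota 1 6)) (iota 1 5) by vm_compute.
have hk' : k \in iota 1 5 by rewrite mem_iota addnC.
have hj' : j \in iota 1 6 by rewrite mem_iota addnC.
by move/allP: A => /(_ k hk') /allP /(_ j hj').
Qed.

Theorem lemma17 (i : int) (k j : nat) :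
  1 < i -> (1 <= k <= 5)%N -> (1 <= j <= 6)%N ->
  exists (k' j' : nat), (1 <= k' <= 5)%N /\ (1 <= j' <= 6)%N /\
    Sigma i (ins_pair k (i + 2) (C j i)) = Some (ins_pair k' i (C j' (i + 1))).
Proof.
move=> _ hk hj.
have /hasP [[k' j'] /allpairsP [[x y] [hx hy [-> ->]]] /eqP H] := base k j hk hj.
exists x, y; split; first by rewrite mem_iota in hx; move: hx; rewrite addnC.
split; first by rewrite mem_iota in hy; move: hy; rewrite addnC.
have CE : forall jj a, C jj (i + a) = mapP (fun x => i + x) (C jj a).
  move=> jj a; case: jj => [|[|[|[|[|[|[|jj]]]]]]] //=;
  by rewrite /mapP /= ?addrA.
have E0 : i = i + 0 by rewrite addr0.
have Hl : ins_pair k (i + 2) (C j i) = mapP (fun x => i + x) (ins_pair k 2 (C j 0)).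
  by rewrite {2}E0 CE /ins_pair /mapP /= !ins_map.
have Hr : ins_pair x i (C y (i + 1)) = mapP (fun x => i + x) (ins_pair x 0 (C y 1)).
  by rewrite CE /ins_pair /mapP /= -!ins_map' addr0.
rewrite Hl Hr {1}E0 Sigma_map' H /=; done.
Qed.
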